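(* Let $n,m\in\mathbb{N}$, let $f:\mathbb{F}_2^n\to\mathbb{F}_2$ be $m$-bent, and let $h(\mathbf{x})=\mathbf{x}\cdot\mathbf{y}$ for some $\mathbf{y}\in\mathbb{F}_2^n$. When the three-query algorithm $A^{(m)3,3}_n(h,f,f)$ is executed, the probability of measuring the all-zero state $\ket{0^n}$ is nonzero if $\mathbf{y}=0^n$ (i.e. $h$ is the zero function) and is zero if $\mathbf{y}\neq 0^n$ (i.e. $h$ is balanced).
   Context: $\zeta_m=e^{2\pi i/m}$, $\overline{\zeta_m}$ its conjugate; $wt$ is Hamming weight; $\mathbf{x}\cdot\mathbf{y}=\bigoplus_i x_iy_i$. $f$ is $m$-bent if $|\mathcal{H}^{(m)}_f(\boldsymbol{\omega})|=1$ for all $\boldsymbol{\omega}$, where $\mathcal{H}^{(m)}_f(\boldsymbol{\omega})=2^{-n/2}\sum_{\mathbf{x}}(-1)^{f(\mathbf{x})\oplus\mathbf{x}\cdot\boldsymbol{\omega}}\zeta_m^{wt(\mathbf{x})}$. Gates: $\mathrm{H}$ Hadamard; $\Omega_m=\frac{1}{\sqrt2}\begin{pmatrix}1&\zeta_m\\1&-\zeta_m\end{pmatrix}$; $\overline{\Omega}_m=\frac{1}{\sqrt2}\begin{pmatrix}1&\overline{\zeta_m}\\1&-\overline{\zeta_m}\end{pmatrix}$; $U_f$ is the phase oracle $\ket{\mathbf{x}}\mapsto(-1)^{f(\mathbf{x})}\ket{\mathbf{x}}$. Algorithm $A^{(m)3,3}_n(f_1,f_2,f_3)$: from $\ket{0^n}$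 apply in order $\mathrm{H}^{\otimes n}$, $U_{f_2}$, $\Omega_m^{\otimes n}$, $U_{f_1}$, $\mathrm{H}^{\otimes n}$, $U_{f_3}$, $\overline{\Omega}_m^{\otimes n}$, then measure all qubits. *)

(* Defs.v *)
From HB Require Import structures.
From mathcomp Require Import all_boot all_order all_algebra.
From mathcomp Require Import reals trigo.
From mathcomp Require Import complex.
Set Implicit Arguments. Unset Strict Implicit. Unset Printing Implicit Defensive.
Import Order.TTheory GRing.Theory Num.Theory.
Local Open Scope ring_scope.
Local Open Scope complex_scope.

Notation bits n := {ffun 'I_n -> bool}.

Definition zero_bits (n : nat) : bits n := [ffun=> false].

Definition dotb (n : nat) (x y : bits n) : bool :=
  \big[addb/false]_(i < n) (x i && y i).

Definition wt (n : nat) (x : bits n) : nat := \sum_(i < n) (x i : nat).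

Definition sgnC (R : realType) (b : bool) : R[i] := (-1) ^+ b.

Definition zeta (R : realType) (m : nat) : R[i] :=
  (cos (2 * pi / m%:R))%:C + 'i * (sin (2 * pi / m%:R))%:C.

Definition invsqrt2 (R : realType) : R[i] := (Num.sqrt (2 : R))^-1%:C.

Definition Hm (R : realType) (n m : nat) (f : bits n -> bool) (w : bits n) : R[i] :=
  invsqrt2 R ^+ n *
  \sum_(x : bits n) sgnC R (f x (+) dotb x w) * zeta R m ^+ wt x.

Definition mbent (R : realType) (n m : nat) (f : bits n -> bool) : Prop :=
  forall w : bits n, `|Hm R m f w| = 1.

Definition state (R : realType) (n : nat) := bits n -> R[i].

(* single-qubit gate given by its 2x2 matrix g out_bit in_bit *)
Definition gate (R : realType) := bool -> bool -> R[i].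

Definition apply_tensor (R : realType) (n : nat) (g : gate R) (psi : state R n)
  : state R n :=
  fun x => \sum_(y : bits n) (\prod_(i < n) g (x i) (y i)) * psi y.

Definition apply_oracle (R : realType) (n : nat) (f : bits n -> bool) (psi : state R n)
  : state R n := fun x => sgnC R (f x) * psi x.

Definition ket0 (R : realType) (n : nat) : state R n :=
  fun x => if x == zero_bits n then 1 else 0.

Definition hadamard (R : realType) : gate R :=
  fun a b => invsqrt2 R * sgnC R (a && b).

(* Omega_m = 1/sqrt2 [[1, z],[1, -z]] *)
Definition omega (R : realType) (m : nat) : gate R :=
  fun a b => invsqrt2 R * (if b then sgnC R a * zeta R m else 1).

(* conjugate Omega_m = 1/sqrt2 [[1, conj z],[1, -conj z]] *)
Definition omega_bar (R : realType) (m : nat) : gate R :=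
  fun a b => invsqrt2 R * (if b then sgnC R a * (zeta R m)^* else 1).

Definition A33_state (R : realType) (n m : nat) (f1 f2 f3 : bits n -> bool)
  : state R n :=
  apply_tensor (omega_bar R m)
  (apply_oracle f3
  (apply_tensor (hadamard R)
  (apply_oracle f1
  (apply_tensor (omega R m)
  (apply_oracle f2
  (apply_tensor (hadamard R) (@ket0 R n))))))).

Definition prob_outcome (R : realType) (n m : nat) (f1 f2 f3 : bits n -> bool)
  (x : bits n) : R[i] :=
  `|A33_state R m f1 f2 f3 x| ^+ 2.

(* Main.v *)
Require Import Defs.
From HB Require Import structures.
From mathcomp Require Import all_boot all_order all_algebra.
From mathcomp Require Import reals trigo.
From mathcomp Require Import complex.
From mathcomp Require Import ring.
Set Implicit Arguments. Unset Strict Implicit. Unset Printing Implicit Defensive.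
Import Order.TTheory GRing.Theory Num.Theory.
Local Open Scope ring_scope.

Section S.
Variable R : realType.
Local Notation C := (R[i]).
Local Notation c := (invsqrt2 R).

Lemma sgnC_add (a b : bool) : sgnC R (a (+) b) = sgnC R a * sgnC R b.
Proof. by case: a; case: b; rewrite /sgnC /= ?expr0 ?expr1 ?mulr1 ?mul1r ?mulrNN ?mulr1. Qed.

Lemma sgnC_neg (a : bool) : sgnC R (~~ a) = - sgnC R a.
Proof. by case: a; rewrite /sgnC /= ?expr0 ?expr1 ?opprK. Qed.

Lemma sgnC_conj (a : bool) : conjc (sgnC R a) = sgnC R a.
Proof. by rewrite /sgnC rmorphXn rmorphN1. Qed.

Lemma c_conj : conjc c = c.
Proof. by rewrite /invsqrt2 conjc_real. Qed.

Lemma c_neq0 : c != 0.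
Proof.
rewrite /invsqrt2 -complexr0 eq_complex /= eqxx andbT invr_eq0.
by rewrite sqrtr_eq0 -ltNge.
Qed.

Lemma sgn_dot n (x y : bits n) :
  \prod_(i < n) sgnC R (x i && y i) = sgnC R (dotb x y).
Proof.
by rewrite /dotb (big_morph (sgnC R) (@sgnC_add) (erefl (sgnC R false))).
Qed.

Lemma pow_wt n (z : C) (y : bits n) : \prod_(i < n) z ^+ y i = z ^+ wt y.
Proof.
by rewrite /wt (big_morph (fun k => z ^+ k) (exprD z) (expr0 z)).
Qed.

Lemma prod_gate n (g : gate R) (z : C) :
  (forall a b, g a b = c * (sgnC R (a && b) * z ^+ b)) ->
  forall x y : bits n,
  \prod_(i < n) g (x i) (y i) = c ^+ n * (sgnC R (dotb x y) * z ^+ wt y).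
Proof.
move=> hg x y; under eq_bigr => i _ do rewrite hg.
by rewrite big_split /= prodr_const card_ord big_split /= sgn_dot pow_wt.
Qed.

Lemma omegaE m : forall a b, omega R m a b = c * (sgnC R (a && b) * zeta R m ^+ b).
Proof. by move=> a [|]; rewrite /omega /sgnC /= ?andbT ?andbF ?expr1 ?expr0 ?mulr1. Qed.

Lemma omegabE m : forall a b, omega_bar R m a b = c * (sgnC R (a && b) * conjc (zeta R m) ^+ b).
Proof. by move=> a [|]; rewrite /omega_bar /sgnC /= ?andbT ?andbF ?expr1 ?expr0 ?mulr1. Qed.

Lemma hadE : forall a b, hadamard R a b = c * (sgnC R (a && b) * 1 ^+ b).
Proof. by move=> a b; rewrite expr1n mulr1. Qed.

Lemma dotbC n (x y : bits n) : dotb x y = dotb y x.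
Proof. by rewrite /dotb; apply: eq_bigr => i _; rewrite andbC. Qed.

Lemma dotb0 n (x : bits n) : dotb x (zero_bits n) = false.
Proof. by rewrite /dotb big1 // => i _; rewrite ffunE andbF. Qed.

Lemma wt0 n : wt (zero_bits n) = 0%N.
Proof. by rewrite /wt big1 // => i _; rewrite ffunE. Qed.

Lemma char_sum n (y : bits n) :
  \sum_(w : bits n) sgnC R (dotb w y) = if y == zero_bits n then (2 ^ n)%:R else 0.
Proof.
case: eqP => [->|/eqP ny].
  under eq_bigr => w _ do rewrite dotb0 /sgnC expr0.
  by rewrite sumr_const card_ffun card_bool card_ord.
have [i yi] : exists i, y i.
  apply/existsP; apply: contraR ny; rewrite negb_exists => /forallP H.
  by apply/eqP/ffunP => j; rewrite ffunE; apply/negbTE/H.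
pose t (w : bits n) : bits n := [ffun j => if j == i then ~~ w j else w j].
have tK : involutive t.
  by move=> w; apply/ffunP => j; rewrite !ffunE; case: eqP => // _; rewrite negbK.
have tdot w : dotb (t w) y = ~~ dotb w y.
  rewrite /dotb (bigD1 i) //= [in RHS](bigD1 i) //= !ffunE eqxx yi !andbT.
  rewrite negb_add; congr (_ (+) _); apply: eq_bigr => j /negbTE ji.
  by rewrite ffunE ji.
set S := \sum_w _.
have : S = - S.
  rewrite {1}/S (reindex_inj (can_inj tK)) /= -sumrN.
  by apply: eq_bigr => w _; rewrite tdot sgnC_neg.
move/eqP; rewrite -addr_eq0 -mulr2n mulrn_eq0 /= => /eqP //.
Qed.


Lemma tensor_g n (g : gate R) (z : C) (hg : forall a b, g a b = c * (sgnC R (a && b) * z ^+ b))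
  (psi : state R n) x :
  apply_tensor g psi x = \sum_y c ^+ n * (sgnC R (dotb x y) * z ^+ wt y) * psi y.
Proof. by apply: eq_bigr => y _; rewrite (prod_gate hg). Qed.

Lemma E1 n x : apply_tensor (hadamard R) (@ket0 R n) x = c ^+ n.
Proof.
rewrite (tensor_g hadE) (bigD1 (zero_bits n)) //= big1 => [|y /negbTE yn].
  by rewrite /ket0 eqxx dotb0 wt0 /sgnC !expr0 !mulr1 addr0.
by rewrite /ket0 yn mulr0.
Qed.

Lemma E3 n m (f : bits n -> bool) x :
  apply_tensor (omega R m) (apply_oracle f (apply_tensor (hadamard R) (@ket0 R n))) x
  = c ^+ n * Hm R m f x.
Proof.
rewrite (tensor_g (omegaE m)) /Hm !mulr_sumr; apply: eq_bigr => y _.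
rewrite /apply_oracle E1 sgnC_add dotbC; ring.
Qed.

Lemma Hconj n m (f : bits n -> bool) w :
  conjc (Hm R m f w) = c ^+ n * \sum_x sgnC R (f x) * sgnC R (dotb x w) * conjc (zeta R m) ^+ wt x.
Proof.
rewrite /Hm rmorphM; congr (_ * _).
  by rewrite rmorphXn; congr (_ ^+ _); exact: c_conj.
rewrite rmorph_sum; apply: eq_bigr => x _.
rewrite rmorphM; congr (_ * _); last exact: rmorphXn.
rewrite -sgnC_add; exact: sgnC_conj.
Qed.

Lemma amp n m (f : bits n -> bool) y :
  A33_state R m (fun x => dotb x y) f f (zero_bits n) =
  c ^+ n * c ^+ n * \sum_w sgnC R (dotb w y) * (Hm R m f w * conjc (Hm R m f w)).
Proof.
rewrite [RHS]mulr_sumr.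
under [RHS]eq_bigr => w _ do rewrite Hconj !mulr_sumr.
rewrite [RHS]exchange_big.
rewrite /A33_state (tensor_g (omegabE m)); apply: eq_bigr => x _.
rewrite {1}/apply_oracle (tensor_g hadE) !mulr_sumr; apply: eq_bigr => w _.
rewrite /apply_oracle E3 dotbC dotb0 /sgnC expr0 expr1n; ring.
Qed.

End S.

Theorem corollary3 (R : realType) (n m : nat) (hm : (0 < m)%N)
  (f : bits n -> bool) (hf : mbent R m f) (y : bits n) :
  let h := fun x : bits n => dotb x y in
  (y = zero_bits n -> prob_outcome R m h f f (zero_bits n) != 0) /\
  (y <> zero_bits n -> prob_outcome R m h f f (zero_bits n) = 0).
Proof.
move=> h.
have HH w : Hm R m f w * conjc (Hm R m f w) = 1.
  by move: (normCK (Hm R m f w)); rewrite hf expr1n => /esym.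
have A := @amp R n m f y.
have S : \sum_w sgnC R (dotb w y) * (Hm R m f w * conjc (Hm R m f w))
  = \sum_w sgnC R (dotb w y) by apply: eq_bigr => w _; rewrite HH mulr1.
rewrite S char_sum in A.
rewrite /prob_outcome /h A; split.
  move=> ->; rewrite eqxx expf_eq0 normr_eq0 !mulf_eq0 !expf_eq0.
  by rewrite (negbTE (@c_neq0 R)) pnatr_eq0 expn_eq0 !andbF.
by move=> /eqP /negbTE ->; rewrite mulr0 normr0 expr0n.
Qed.
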